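(* For any $n\ge2$ and $D\subseteq[n-1]$, \[ \widetilde{Q}_{n,D}(1,q,q^2,\dots;t,tq,tq^2,\dots)=\frac{1}{(q;q)_n}\sum_{S\subseteq[n]}q^{\operatorname{comaj}(D,S)}t^{|S|}, \] i.e. the specialization $x_i=q^{i-1}$, $y_i=tq^{i-1}$ of $\widetilde{Q}_{n,D}(\mathbf{x};\mathbf{y})$ is as shown, where $(q;q)_n=(1-q)(1-q^2)\cdots(1-q^n)$.
   Context: Let $\mathcal{A}_+=\{1,2,\dots\}$, $\mathcal{A}_-=\{\bar1,\bar2,\dots\}$, and $\mathcal{A}=\mathcal{A}_+\sqcup\mathcal{A}_-$ totally ordered as $1<\bar1<2<\bar2<\cdots$. Set $z_a=x_a$ for $a\in\mathcal{A}_+$ and $z_{\bar b}=y_b$. The super quasisymmetric function is \[ \widetilde{Q}_{n,D}(\mathbf{x};\mathbf{y})=\sum z_{a_1}z_{a_2}\cdots z_{a_n}, \] summed over weakly increasing sequences $a_1\le\cdots\le a_n$ in $\mathcal{A}$ such that $a_i=a_{i+1}\in\mathcal{A}_+$ implies $i\notin D$ and $a_i=a_{i+1}\in\mathcal{A}_-$ implies $i\in D$. For $D\subseteq[n-1]$, $S\subseteq[n]$, the relative comajor index is $\operatorname{comaj}(D,S)=\sum (n-i)$ over all $1\le i\le n-1$ such that either ($i\in D$ and $i+1\notin S$) or ($i\notin D$ and $i\in S$). *)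

(* Defs.v *)
From HB Require Import structures.
From mathcomp Require Import all_boot all_order all_algebra.
From mathcomp Require Import all_classical all_reals all_analysis.
Set Implicit Arguments. Unset Strict Implicit. Unset Printing Implicit Defensive.
Import Order.TTheory GRing.Theory Num.Theory.
Local Open Scope ring_scope.

(* Sets of positive integers are encoded as subsets of an ordinal type whose
   elements are labelled by their own value:
     D ⊆ [n-1]  is  D : {set 'I_n}    with 0 ∉ D,
     S ⊆ [n]    is  S : {set 'I_n.+1} with 0 ∉ S.
   nmem A i  tests whether the natural number i belongs to A. *)
Definition nmem (m : nat) (A : {set 'I_m}) (i : nat) : bool :=
  [exists j in A, (j : nat) == i].

Definition comaj (n : nat) (D : {set 'I_n}) (S : {set 'I_n.+1}) : nat :=
  (\sum_(1 <= i < n | (nmem D i && ~~ nmem S i.+1) || (~~ nmem D i && nmem S i))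
      (n - i))%N.

(* Letters of the alphabet A = {1 < 1bar < 2 < 2bar < ...} are encoded by
   natural numbers: 2(k-1) ↦ k, 2(k-1)+1 ↦ kbar; this respects the order.
   The letters <= Mbar are the elements of 'I_(2*M). *)

Definition zspec (R : pzRingType) (q t : R) (c : nat) : R :=
  (if odd c then t else 1) * q ^+ c./2.

(* admissible words a_1 <= ... <= a_n (0-indexed positions 0..n-1):
   for consecutive positions i, i+1 (paper index i+1 =: j),
   a_i <= a_{i+1}; if a_i = a_{i+1} is unbarred then j ∉ D,
   if a_i = a_{i+1} is barred then j ∈ D. *)
Definition admissible (n m : nat) (D : {set 'I_n}) (a : {ffun 'I_n -> 'I_m}) : bool :=
  [forall i : 'I_n, forall j : 'I_n, ((j : nat) == i.+1) ==>
     ((a i <= a j)%N &&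
      ((a i == a j :> nat) ==> (if odd (a i) then nmem D j else ~~ nmem D j)))].

(* Truncation of the specialized super quasisymmetric function to the
   letters 1 < 1bar < ... < M < Mbar. *)
Definition Qtrunc (R : pzRingType) (n : nat) (D : {set 'I_n}) (q t : R) (M : nat) : R :=
  \sum_(a : {ffun 'I_n -> 'I_(2 * M)} | admissible D a)
     \prod_(i < n) zspec q t (a i).

Definition qpoch (R : pzRingType) (q : R) (n : nat) : R :=
  \prod_(1 <= k < n.+1) (1 - q ^+ k).

(* Main.v *)
Require Import Defs.
From HB Require Import structures.
From mathcomp Require Import all_boot all_order all_algebra.
From mathcomp Require Import all_classical all_reals all_analysis.
From mathcomp Require Import ring lra.
Import Order.TTheory GRing.Theory Num.Theory.
Import numFieldNormedType.Exports.
Local Open Scope classical_set_scope.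
Local Open Scope ring_scope.
Set Implicit Arguments. Unset Strict Implicit. Unset Printing Implicit Defensive.

Section Chain.
Variable R : realType.

Definition fcons (T : finType) k (y : T) (g : {ffun 'I_k -> T}) : {ffun 'I_k.+1 -> T} :=
  [ffun i => oapp g y (unlift ord0 i)].

Lemma sum_ffunS (T : finType) k (F : {ffun 'I_k.+1 -> T} -> R) :
  \sum_f F f = \sum_(y : T) \sum_(g : {ffun 'I_k -> T}) F (fcons y g).
Proof.
rewrite pair_big /=.
rewrite (reindex (fun p : T * {ffun 'I_k -> T} => fcons p.1 p.2)) //=.
exists (fun f => (f ord0, [ffun j => f (lift ord0 j)])).
- move=> [y g] _ /=; congr pair; first by rewrite ffunE unlift_none.
  by apply/ffunP => j; rewrite !ffunE liftK.
- move=> f _; apply/ffunP => i; rewrite !ffunE.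
  by case: unliftP => [j ->|->] /=; rewrite ?ffunE.
Qed.

Definition prevf (T : finType) k (x : option T) (a : {ffun 'I_k -> T}) (i : nat) : option T :=
  if i is j.+1 then omap a (insub j : option 'I_k) else x.

Definition chainW (T : finType) (w : nat -> option T -> T -> R) k x (a : {ffun 'I_k -> T}) : R :=
  \prod_(i < k) w i (prevf x a i) (a i).

Arguments chainW {T} w k x a.

Fixpoint chainR (T : finType) (w : nat -> option T -> T -> R) k x : R :=
  if k is k'.+1 then \sum_(y : T) w 0%N x y * chainR (fun i => w i.+1) k' (Some y) else 1.

Lemma prevf_cons (T : finType) k x (y : T) (g : {ffun 'I_k -> T}) (i : 'I_k) :
  prevf x (fcons y g) (lift ord0 i) = prevf (Some y) g i.
Proof.
rewrite /prevf lift0.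
have Hi : (i < k.+1)%N by apply: ltnW; rewrite ltnS.
case: insubP => [ o oP Ho | H ]; last by rewrite Hi in H.
rewrite /=; clear oP.
case: i Hi Ho => [[|j] Hj] Hi /= Ho.
  by rewrite (_ : o = ord0) ?ffunE ?unlift_none //; apply: val_inj.
have Hj' : (j < k)%N by apply: ltnW.
rewrite (_ : o = lift ord0 (Ordinal Hj')) ?ffunE ?liftK /= ?insubT //.
by apply: val_inj; rewrite /= Ho.
Qed.

Lemma chainW_cons (T : finType) w k x (y : T) (g : {ffun 'I_k -> T}) :
  chainW w k.+1 x (fcons y g) = w 0%N x y * chainW (fun i => w i.+1) k (Some y) g.
Proof.
rewrite /chainW big_ord_recl; congr (_ * _); first by rewrite ffunE unlift_none.
by apply: eq_bigr => i _; rewrite prevf_cons ffunE liftK lift0.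
Qed.

Lemma chainE (T : finType) k : forall w x,
  \sum_(a : {ffun 'I_k -> T}) chainW w k x a = chainR w k x.
Proof.
elim: k => [|k IH] w x.
  rewrite /=; under eq_bigr do rewrite /chainW big_ord0.
  by rewrite sumr_const card_ffun card_ord expn0.
rewrite sum_ffunS /=; apply: eq_bigr => y _.
under eq_bigr do rewrite chainW_cons.
by rewrite -mulr_sumr IH.
Qed.

Lemma eq_chainR (T : finType) k : forall (w w' : nat -> option T -> T -> R) x,
  (forall i x y, w i x y = w' i x y) -> chainR w k x = chainR w' k x.
Proof.
elim: k => [|k IH] w w' x H //=.
apply: eq_bigr => y _; rewrite H; congr (_ * _); apply: IH => *; apply: H.
Qed.


Definition okp (p : bool) (x : option nat) (y : nat) : bool :=
  if x is Some x0 then (x0 <= y)%N && ((x0 == y) ==> (if odd x0 then p else ~~ p)) else true.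

Variables q t : R.

Fixpoint V (P : nat -> bool) L k (x : option nat) : R :=
  if k is k'.+1 then \sum_(y < L) (okp (P 0%N) x y)%:R * zspec q t y *
     V (fun j => P j.+1) L k' (Some (val y)) else 1.

Definition wL (P : nat -> bool) L i (x : option 'I_L) (y : 'I_L) : R :=
  (okp (P i) (omap val x) y)%:R * zspec q t y.

Lemma V_chain L k : forall P x, chainR (wL P (L:=L)) k x = V P L k (omap val x).
Proof.
elim: k => [|k IH] P x //=.
apply: eq_bigr => y _; rewrite /wL /=; congr (_ * _).
exact: (IH (fun j => P j.+1) (Some y)).
Qed.

Lemma adm_forall n (D : {set 'I_n}) L (a : {ffun 'I_n -> 'I_L}) :
  admissible D a = [forall i : 'I_n, okp (nmem D i) (omap val (prevf None a i)) (a i)].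
Proof.
apply/idP/idP => H.
  apply/forallP => j; rewrite /prevf.
  case E: (nat_of_ord j) => [|i] //.
  have Hi : (i < n)%N by apply: ltnW; rewrite -E ltn_ord.
  rewrite insubT /=.
  have := implyP (forallP (forallP H (Ordinal Hi)) j); rewrite E eqxx /=.
  by move=> /(_ isT).
apply/forallP => i; apply/forallP => j; apply/implyP => /eqP Hj.
have := forallP H j; rewrite /prevf Hj valK /=.
done.
Qed.

Lemma prod_boolR (I : finType) (B : I -> bool) :
  \prod_i (B i)%:R = ([forall i, B i])%:R :> R.
Proof.
case: (boolP [forall i, B i]) => H.
  by rewrite big1 // => i _; rewrite (forallP H).
have [i Hi] : exists i, ~~ B i by apply/existsP; rewrite -negb_forall.
by rewrite (bigD1 i) //= (negbTE Hi) mul0r.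
Qed.

Lemma Qtrunc_V n (D : {set 'I_n}) M :
  Qtrunc D q t M = V (fun j => nmem D j) (2 * M) n None.
Proof.
rewrite /Qtrunc -(V_chain _ _ None) -chainE big_mkcond /=; apply: eq_bigr => a _.
rewrite /chainW /wL [in RHS]big_split /=.
rewrite [X in _ = X * _](_ : _ = (admissible D a)%:R); last first.
  by rewrite adm_forall; apply: prod_boolR.
by case: admissible; rewrite ?mul1r ?mul0r.
Qed.

Lemma zspecSS y : zspec q t y.+2 = q * zspec q t y.
Proof. by rewrite /zspec /= negbK exprS mulrCA. Qed.

Lemma okpSS p x y : okp p (Some x.+2) y.+2 = okp p (Some x) y.
Proof. by rewrite /okp /= negbK. Qed.

Lemma V_S P L k x : V P L k.+1 x = \sum_(y < L) (okp (P 0%N) x y)%:R * zspec q t y *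
     V (fun j => P j.+1) L k (Some (val y)).
Proof. by []. Qed.

Lemma V_shift L k : forall P x, V P L.+2 k (Some x.+2) = q ^+ k * V P L k (Some x).
Proof.
elim: k => [|k IH] P x; first by rewrite /= expr0 mulr1.
rewrite !V_S big_ord_recl big_ord_recl.
have -> : okp (P 0%N) (Some x.+2) (@ord0 L.+1) = false by [].
have -> : okp (P 0%N) (Some x.+2) (lift ord0 (@ord0 L)) = false by rewrite lift0.
rewrite !mul0r !add0r exprS -mulrA mulr_sumr mulr_sumr; apply: eq_bigr => i _.
rewrite !lift0 okpSS zspecSS IH; ring.
Qed.

Lemma V_split L k P (x : option bool) :
  V P L.+2 k.+1 (omap nat_of_bool x) =
  (okp (P 0%N) (omap nat_of_bool x) 0)%:R * V (fun j => P j.+1) L.+2 k (Some 0%N) +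
  (okp (P 0%N) (omap nat_of_bool x) 1)%:R * t * V (fun j => P j.+1) L.+2 k (Some 1%N) +
  q ^+ k.+1 * V P L k.+1 None.
Proof.
rewrite !V_S big_ord_recl big_ord_recl addrA; congr (_ + _ + _).
- by rewrite /zspec /= mul1r mulr1.
- by rewrite lift0 /zspec /= mulr1.
rewrite exprS -mulrA mulr_sumr mulr_sumr; apply: eq_bigr => i _.
rewrite !lift0 zspecSS V_shift.
have -> : okp (P 0%N) (omap nat_of_bool x) i.+2 = true by case: x => [[]|].
rewrite /=; ring.
Qed.

Lemma rec_lim (r c : R) (u x : nat -> R) : `|r| < 1 -> u @ \oo --> c ->
  (forall N, x N.+1 = u N.+1 + r * x N) -> x @ \oo --> c / (1 - r).
Proof.
move=> hr hu hx.
have r1 : 1 - r != 0.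
  rewrite subr_eq0; apply/negP => /eqP H; move: hr; rewrite -H normr1 ltxx //.
set l := c / (1 - r).
have hl : l = c + r * l by rewrite /l; field.
set e := fun N => x N - l.
have he : forall N, e N.+1 = (u N.+1 - c) + r * e N.
  by move=> N; rewrite /e hx {1}hl; ring.
apply/cvgrPdist_le => eps eps0.
set rho := `|r|.
have rho0 : 0 <= rho by rewrite normr_ge0.
have d0 : 0 < (eps / 2) * (1 - rho) by rewrite mulr_gt0 // ?subr_gt0 // divr_gt0.
have := (cvgrPdist_le _ _).1 hu _ d0.
case=> N0 _ HN0.
have Hg : forall m, `|e (N0 + m)%N| <= eps / 2 + rho ^+ m * `|e N0|.
  elim => [|m IHm]; first by rewrite addn0 expr0 mul1r lerDr divr_ge0 // ltW.
  rewrite addnS he.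
  have h1 : `|u (N0 + m).+1 - c| <= eps / 2 * (1 - rho).
    by rewrite distrC; apply: HN0; rewrite /= -addnS leq_addr.
  have h2 : rho * `|e (N0 + m)%N| <= rho * (eps / 2 + rho ^+ m * `|e N0|).
    by apply: ler_wpM2l.
  apply: (le_trans (ler_normD _ _)); rewrite normrM -/rho exprS -mulrA.
  lra.
have hrho : `|rho| < 1 by rewrite normr_id.
set E := `|e N0|.
have E0 : 0 <= E by rewrite normr_ge0.
have dd : 0 < eps / 2 / (E + 1) by rewrite !divr_gt0 // ltr_wpDl.
have := (cvgrPdist_le _ _).1 (cvg_expr hrho) _ dd.
case=> M1 _ HM1.
exists (N0 + M1)%N => // N /= HN.
have -> : N = (N0 + (N - N0))%N by rewrite subnKC // (leq_trans (leq_addr _ _) HN).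
rewrite distrC -/(e _).
apply: (le_trans (Hg _)).
have h3 : rho ^+ (N - N0) <= eps / 2 / (E + 1).
  have := HM1 (N - N0)%N; rewrite /= sub0r normrN ger0_norm ?exprn_ge0 //.
  by apply; rewrite leq_subRL ?(leq_trans (leq_addr _ _) HN) // addnC.
have h4 : rho ^+ (N - N0) * E <= eps / 2 / (E + 1) * E by apply: ler_wpM2r.
have h5 : eps / 2 / (E + 1) * (E + 1) = eps / 2.
  by field; rewrite gt_eqF // ltr_wpDl.
have h6 : 0 <= eps / 2 / (E + 1) by apply: ltW.
move: h4 h5 h6; generalize (eps / 2 / (E + 1)) => d h4 h5 h6.
have h7 : d * E <= eps / 2 by rewrite -h5 mulrDr mulr1 lerDl.
rewrite -/E.
lra.
Qed.

Definition strict (p : bool) (x : option bool) (y : bool) : bool :=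
  if x is Some x0 then (p && ~~ y) || (~~ p && x0) else false.

Definition wb (P : nat -> bool) K i (x : option bool) (y : bool) : R :=
  t ^+ y * q ^+ ((K - i) * strict (P i) x y).

Definition Rb P k x := chainR (wb P k) k x.

Lemma Rb_rec P k x : Rb P k.+1 x = \sum_(b : bool)
  t ^+ b * q ^+ (k.+1 * strict (P 0%N) x b) * Rb (fun j => P j.+1) k (Some b).
Proof.
by rewrite /Rb /=; apply: eq_bigr => b _; rewrite /wb subn0.
Qed.

Lemma qpochS k : qpoch q k.+1 = qpoch q k * (1 - q ^+ k.+1).
Proof. by rewrite /qpoch big_nat_recr. Qed.

Lemma qpoch0 : qpoch q 0 = 1.
Proof. by rewrite /qpoch big_geq. Qed.

Hypothesis hq : `|q| < 1.

Lemma qpow_lt1 k : `|q ^+ k.+1| < 1.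
Proof. by rewrite normrX exprn_ilt1. Qed.

Lemma qpow_neq1 k : 1 - q ^+ k.+1 != 0.
Proof.
rewrite subr_eq0; apply/negP => /eqP H; have := qpow_lt1 k.
by rewrite -H normr1 ltxx.
Qed.

Lemma qpoch_neq0 k : qpoch q k != 0.
Proof.
elim: k => [|k IH]; first by rewrite qpoch0 oner_neq0.
by rewrite qpochS mulf_neq0 // qpow_neq1.
Qed.

Lemma shiftS (f : nat -> R) (l : R) : f @ \oo --> l -> (fun N => f N.+1) @ \oo --> l.
Proof. by move=> H; rewrite cvg_shiftS. Qed.

Lemma unshiftS (f : nat -> R) (l : R) : (fun N => f N.+1) @ \oo --> l -> f @ \oo --> l.
Proof. by move=> H; rewrite -cvg_shiftS. Qed.

Lemma V_lim k : forall P (x : option bool),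
  (fun N => V P (2 * N) k (omap nat_of_bool x)) @ \oo --> Rb P k x / qpoch q k.
Proof.
elim: k => [|k IH] P x.
  rewrite /Rb /= qpoch0 divr1; first [exact: (cvg_cst (1 : R)) | idtac "A"; exact: (@cvg_cst R _ _ _) | idtac "B"; apply: cvgr_cst | idtac "C"; exact: cvg_cst ].
set P' := fun j => P j.+1.
have V2 : forall N (y : option bool), V P (2 * N.+1) k.+1 (omap nat_of_bool y) =
  (okp (P 0%N) (omap nat_of_bool y) 0)%:R * V P' (2 * N.+1) k (Some 0%N) +
  (okp (P 0%N) (omap nat_of_bool y) 1)%:R * t * V P' (2 * N.+1) k (Some 1%N) +
  q ^+ k.+1 * V P (2 * N) k.+1 None.
  by move=> N y; rewrite (_ : (2 * N.+1 = (2 * N).+2)%N) ?V_split // mulnS add2n.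
have Ha : (fun N => V P (2 * N) k.+1 None) @ \oo -->
   (Rb P' k (Some false) / qpoch q k + t * (Rb P' k (Some true) / qpoch q k)) / (1 - q ^+ k.+1).
  apply: (rec_lim (u := fun N => V P' (2 * N) k (Some 0%N) + t * V P' (2 * N) k (Some 1%N))).
  - exact: qpow_lt1.
  - apply: cvgD; first exact: (IH P' (Some false)).
    by apply: cvgMl_tmp; exact: (IH P' (Some true)).
  - by move=> N; have := V2 N None; rewrite /= => ->; ring.
case: x => [b|]; last first.
  suff -> : Rb P k.+1 None / qpoch q k.+1 =
   (Rb P' k (Some false) / qpoch q k + t * (Rb P' k (Some true) / qpoch q k)) / (1 - q ^+ k.+1)
   by exact: Ha.
  rewrite Rb_rec big_bool qpochS /= !muln0 !expr0 !mulr1 expr1.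
  field; apply/andP; split; [exact: qpow_neq1 | exact: qpoch_neq0].
apply: unshiftS.
have -> : (fun N => V P (2 * N.+1) k.+1 (omap nat_of_bool (Some b))) =
  (fun N => (okp (P 0%N) (Some (nat_of_bool b)) 0)%:R * V P' (2 * N.+1) k (Some 0%N) +
  (okp (P 0%N) (Some (nat_of_bool b)) 1)%:R * t * V P' (2 * N.+1) k (Some 1%N) +
  q ^+ k.+1 * V P (2 * N) k.+1 None).
  by apply/funext => N; rewrite V2.
suff -> : Rb P k.+1 (Some b) / qpoch q k.+1 =
   (okp (P 0%N) (Some (nat_of_bool b)) 0)%:R * (Rb P' k (Some false) / qpoch q k) +
   (okp (P 0%N) (Some (nat_of_bool b)) 1)%:R * t * (Rb P' k (Some true) / qpoch q k) +
   q ^+ k.+1 * ((Rb P' k (Some false) / qpoch q k + t * (Rb P' k (Some true) / qpoch q k))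
      / (1 - q ^+ k.+1)).
  apply: cvgD; last by apply: cvgMl_tmp; exact: Ha.
  apply: cvgD; apply: cvgMl_tmp.
    exact: (shiftS (f := fun N => V P' (2 * N) k (Some 0%N)) (IH P' (Some false))).
  exact: (shiftS (f := fun N => V P' (2 * N) k (Some 1%N)) (IH P' (Some true))).
rewrite Rb_rec big_bool qpochS /okp /strict /=.
have h1 := qpow_neq1 k; have h2 := qpoch_neq0 k.
rewrite /P'.
case: (P 0%N); case: b => /=; rewrite ?mul1n ?muln0 ?muln1 ?expr0 ?expr1 ?mul1r ?mulr1 ?mul0r;
  field; apply/andP; split => //.
Qed.

Definition setof n (s : {ffun 'I_n -> bool}) : {set 'I_n.+1} :=
  [set i | oapp s false (unlift ord0 i)].
Definition funof n (S : {set 'I_n.+1}) : {ffun 'I_n -> bool} :=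
  [ffun j => lift ord0 j \in S].

Lemma nmem_setof n (s : {ffun 'I_n -> bool}) (i : 'I_n) : nmem (setof s) i.+1 = s i.
Proof.
apply/existsP/idP => [[j /andP [jin /eqP ji]] | si].
  have Ej : j = lift ord0 i by apply: val_inj; rewrite /= ji.
  by move: jin; rewrite Ej inE liftK.
by exists (lift ord0 i); rewrite inE liftK /= si /=; apply/eqP; exact: lift0.
Qed.

Lemma comaj_sum n (D : {set 'I_n}) (s : {ffun 'I_n -> bool}) : (0 < n)%N ->
  (\sum_(i < n) (n - i) * strict (nmem D i) (prevf None s i) (s i))%N = comaj D (setof s).
Proof.
move=> n0.
pose g i := ((n - i) * strict (nmem D i) (if i is 0 then None else Some (nmem (setof s) i))
   (nmem (setof s) i.+1))%N.
rewrite (eq_bigr (fun i : 'I_n => g i)); last first.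
  move=> [[|j] Hj] _; first by rewrite /g /= !muln0.
  have Hj' : (j < n)%N by apply: ltnW.
  rewrite /g /prevf /= insubT /= (_ : Sub j _ = Ordinal Hj'); last by apply: val_inj.
  rewrite -(nmem_setof s (Ordinal Hj')) -(nmem_setof s (Ordinal Hj)) //.
rewrite -(big_mkord xpredT g) big_ltn // {1}/g /= muln0 add0n.
rewrite /comaj [RHS]big_mkcond /=; apply: eq_big_nat => i /andP [i1 _].
rewrite /g; case: i i1 => [|i] //= _.
by case: ifP; rewrite ?muln1 ?muln0.
Qed.

Lemma setsum n (D : {set 'I_n}) : (0 < n)%N ->
  \sum_(S : {set 'I_n.+1} | ord0 \notin S) q ^+ comaj D S * t ^+ #|S| =
  Rb (fun j => nmem D j) n None.
Proof.
move=> n0; rewrite /Rb -chainE.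
rewrite (reindex_onto (@setof n) (@funof n)) /=; last first.
  move=> S HS; apply/setP => i; rewrite inE; case: unliftP => [j ->|->] /=.
    by rewrite ffunE.
  by rewrite (negbTE HS).
rewrite (eq_bigl predT) /=; last first.
  move=> s; rewrite /= inE unlift_none /=; apply/eqP/ffunP => j.
  by rewrite ffunE inE liftK.
apply: eq_bigr => s _.
rewrite /chainW /wb big_split /= mulrC; congr (_ * _).
  rewrite prodrXr; congr (_ ^+ _).
  rewrite -sum1_card big_mkcond /= big_ord_recl inE unlift_none /= add0n.
  by apply: eq_bigr => j _; rewrite inE liftK /=; case: (s j).
by rewrite prodrXr comaj_sum.
Qed.

End Chain.

Theorem proposition5p9 (R : realType) (n : nat) (D : {set 'I_n}) (q t : R) :
  (2 <= n)%N -> (forall i : 'I_n, i \in D -> (0 < i)%N) -> `|q| < 1 ->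
  (fun M : nat => Qtrunc D q t M) @ \oo -->
    (qpoch q n)^-1 *
      \sum_(S : {set 'I_n.+1} | ord0 \notin S) q ^+ comaj D S * t ^+ #|S|.
Proof.
move=> hn hD hq.
have -> : (fun M => Qtrunc D q t M) = (fun M => V q t (fun j => nmem D j) (2 * M) n None).
  by apply/funext => M; rewrite Qtrunc_V.
rewrite setsum ?(leq_trans _ hn) // mulrC.
exact: (@V_lim R q t hq n _ None).
Qed.
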